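(* Let $p\ge1$, $T>0$, $\delta_n=2^{-n}$, and let $S\in C^0([0,T],\mathbb R)$ with $S_0=0$ have a continuous local time $L^{\pi,p}$ of order $p$ along the sequence $\pi=(\pi_n)$ of Lebesgue partitions defined below, with $L^{\pi,p}_t(S,0)>0$ for $t\in(0,T]$. Then for every $t\in(0,T]$, as $n\to\infty$: (i) if $1\le p<2$, $\delta_n D^{\delta_n}_t(S)\to0$; (ii) if $p>2$, $\delta_nD^{\delta_n}_t(S)\to\infty$ and $D^{\delta_n}_t(S)\sim L^{\pi,p}_t(S,0)/\delta_n^{p-1}$; (iii) if $p=2$, $\delta_nD^{\delta_n}_t(S)\to L^{\pi,2}_t(S,0)$, i.e. $D^{\delta_n}_t(S)\sim L^{\pi,2}_t(S,0)/\delta_n$.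
   Context: Lebesgue partitions: $\pi_n=\{t^n_k\}$ with $t^n_0=0$, $t^n_{k+1}=\inf\{t\ge t^n_k: S_t\in\delta_n\mathbb Z\setminus\{S_{t^n_k}\}\}$. For $a,b\in\mathbb R$ write $[\![a,b))=[a,b)$ if $a\le b$ and $[b,a)$ if $a>b$. Set $L^{\pi_n,p}_t(S,x)=\sum_{t^n_j\in\pi_n}1_{[\![S_{t^n_j\wedge t},S_{t^n_{j+1}\wedge t}))}(x)\,|S_{t^n_{j+1}\wedge t}-x|^{p-1}$. $S$ has a continuous local time of order $p$ along $\pi$ if $L^{\pi_n,p}_t(S,x)$ converges, uniformly in $(t,x)\in[0,T]\times\mathbb R$, to a limit $L^{\pi,p}_t(S,x)$ and $(t,x)\mapsto L^{\pi,p}_t(S,x)$ is continuous. Number of $\delta$-excursions: with $\theta^+_0=\tau^+_0=0$, $\tau^+_i=\inf\{u>\theta^+_{i-1}:S_u=\delta\}$, $\theta^+_i=\inf\{u>\tau^+_i:S_u=0\}$, set $D^\delta_t(S)=\sum_{i\ge1}1_{\{\theta^+_i\le t\}}$. *)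

(* Defs.v *)
From HB Require Import structures.
From mathcomp Require Import all_boot all_order all_algebra.
From mathcomp Require Import all_classical all_reals all_analysis.
Set Implicit Arguments. Unset Strict Implicit. Unset Printing Implicit Defensive.
Import Order.TTheory GRing.Theory Num.Theory.
Import numFieldNormedType.Exports.
Local Open Scope classical_set_scope.
Local Open Scope ring_scope.

Section Defs.
Variable R : realType.
Implicit Types (S : R -> R) (T p d t x a : R).

Definition grid d : set R := [set y | exists z : int, y = z%:~R * d].

(* next Lebesgue partition point after a, capped at T:
   min(T, inf{u >= a : S u in dZ \ {S a}}) (restricted to [a,T]) *)
Definition next_lp S T d a : R :=
  inf [set u | a <= u <= T /\ ((grid d (S u) /\ S u <> S a) \/ u = T)].

Fixpoint lp S T d (k : nat) : R :=
  match k with 0%N => 0 | k'.+1 => next_lp S T d (lp S T d k') end.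

Definition in_oint (a b x : R) : bool :=
  if a <= b then (a <= x) && (x < b) else (b <= x) && (x < a).

Definition Lterm S T p d t x (j : nat) : R :=
  (in_oint (S (Num.min (lp S T d j) t)) (S (Num.min (lp S T d j.+1) t)) x)%:R
  * (`|S (Num.min (lp S T d j.+1) t) - x| `^ (p - 1)).

Definition Lpn S T p d t x : R := limn (fun n => \sum_(0 <= j < n) Lterm S T p d t x j).
(* the sum has finitely many nonzero terms for continuous S *)

Definition delta (n : nat) : R := 2 ^- n.

Definition has_cont_local_time S T p (L : R -> R -> R) : Prop :=
  (forall e : R, 0 < e -> exists N : nat, forall n : nat, (N <= n)%N ->
     forall t x, 0 <= t <= T -> `|Lpn S T p (delta n) t x - L t x| < e)
  /\ {within [set tx : R * R | 0 <= tx.1 <= T], continuous (fun tx => L tx.1 tx.2)}.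

(* first hitting time of level lvl strictly after a (within (a,T]);
   T + 1 (i.e. "never before T", standing for +oo) if there is none *)
Definition hit S T a lvl : R :=
  if pselect (exists u, a < u <= T /\ S u = lvl)
  then inf [set u | a < u <= T /\ S u = lvl] else T + 1.

Fixpoint exc S T d (i : nat) : R * R :=
  match i with
  | 0%N => (0, 0)
  | i'.+1 => let tau := hit S T (exc S T d i').2 d in (tau, hit S T tau 0)
  end.

Definition Dexc S T d t : R := limn (fun n => \sum_(0 <= i < n) (((exc S T d i.+1).2 <= t)%R%:R : R)).

End Defs.

(* Main.v *)
Require Import Defs.
From HB Require Import structures.
From mathcomp Require Import all_boot all_order all_algebra.
From mathcomp Require Import all_classical all_reals all_analysis.
From mathcomp Require Import ring lra zify.
Import Order.TTheory GRing.Theory Num.Theory.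
Import numFieldNormedType.Exports.
Local Open Scope classical_set_scope.
Local Open Scope ring_scope.
Set Implicit Arguments. Unset Strict Implicit. Unset Printing Implicit Defensive.

Section Grid.
Variable R : realType.

Lemma grid_lt (d x y : R) : 0 < d -> grid d x -> grid d y -> x < y -> x + d <= y.
Proof.
move=> hd [z ->] [z' ->] h.
have hz : z < z' by move: h; rewrite (ltr_pM2r hd) ltr_int.
rewrite -lezD1 in hz.
have : (z + 1)%:~R * d <= z'%:~R * d :> R by rewrite (ler_pM2r hd) ler_int.
by rewrite intrD mulrDl mul1r.
Qed.

Lemma grid_close (d x y : R) : 0 < d -> grid d x -> grid d y -> `|x - y| < d -> x = y.
Proof.
move=> hd gx gy; rewrite ltr_distlC => /andP[h1 h2]; have [xy|xy|//] := ltgtP x y.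
- by have := grid_lt hd gx gy xy; lra.
- by have := grid_lt hd gy gx xy; lra.
Qed.

Lemma grid0 (d : R) : grid d 0.
Proof. by exists 0; rewrite mul0r. Qed.

End Grid.

Section Cont.
Variable R : realType.
Variables (S : R -> R) (T : R).
Hypothesis hc : {within `[0, T], continuous S}.

Lemma cont_ed x : 0 <= x <= T ->
  forall e, 0 < e -> exists2 eta, 0 < eta & forall y, 0 <= y <= T -> `|x - y| < eta -> `|S x - S y| < e.
Proof.
move=> hx e he.
have Ax : `[0, T]%classic x by rewrite /= in_itv /=.
move/subspace_continuousP: hc => /(_ x Ax).
move/cvgrPdist_lt/(_ e he).
rewrite near_withinE => /nbhs_ballP [eta heta H].
exists eta => // y hy hxy; apply: H.
  by rewrite /ball /=.
by rewrite /= in_itv /=.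
Qed.

Lemma ivt a b v : 0 <= a -> a <= b -> b <= T ->
  Num.min (S a) (S b) <= v <= Num.max (S a) (S b) ->
  exists2 c, a <= c <= b & S c = v.
Proof.
move=> h0 hab hbT hv.
have hc' : {within `[a, b], continuous S}.
  apply: continuous_subspaceW hc => y /=; rewrite !in_itv /= => /andP[h1 h2].
  by rewrite (le_trans h0 h1) (le_trans h2 hbT).
have [c hc1 hc2] := IVT hab hc' hv.
by exists c => //; move: hc1; rewrite in_itv.
Qed.

Lemma lim_right_val u v : 0 <= u <= T ->
  (forall e, 0 < e -> exists w, [/\ u <= w, w < u + e, w <= T & S w = v]) -> S u = v.
Proof.
move=> hu H.
apply/eqP; rewrite -subr_eq0 -normr_eq0; apply/eqP.
apply/le_anti; rewrite normr_ge0 andbT.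
apply/ler_addgt0Pr => e he; rewrite add0r.
have [eta heta Heta] := cont_ed hu he.
have [w [h1 h2 h3 h4]] := H eta heta.
rewrite -h4 ltW // Heta //.
  by case/andP: hu => hu0 _; rewrite (le_trans hu0 h1) h3.
by rewrite distrC ger0_norm ?subr_ge0 // ltrBlDl.
Qed.

Lemma no_inf_osc (d : R) (x : nat -> R) : 0 < d ->
  (forall k, 0 <= x k <= T) -> (forall k, x k <= x k.+1) ->
  (forall k, exists y, [/\ x k <= y, y <= x k.+1 & d <= `|S y - S (x k)|]) -> False.
Proof.
move=> hd hx hmono hosc.
have hsup : has_sup (range x).
  split; first by exists (x 0%N), 0%N.
  by exists T => _ [k _ <-]; case/andP: (hx k).
set l := sup (range x).
have hl : 0 <= l <= T.
  apply/andP; split.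
    apply: le_trans (_ : x 0%N <= l); first by case/andP: (hx 0%N).
    by apply: sup_upper_bound => //; exists 0%N.
  by apply: ge_sup; [exists (x 0%N), 0%N | move=> _ [k _ <-]; case/andP: (hx k)].
have hd2 : 0 < d / 2 by rewrite divr_gt0.
have [eta heta Heta] := cont_ed hl hd2.
have [_ [k _ <-] hk] := sup_adherent heta hsup.
have [y [y1 y2 y3]] := hosc k.
have ub : forall j, x j <= l by move=> j; apply: sup_upper_bound => //; exists j.
have hyT : 0 <= y <= T.
  case/andP: (hx k) => a _; case/andP: (hx k.+1) => _ b.
  by rewrite (le_trans a y1) (le_trans y2 b).
have e1 : `|S l - S y| < d / 2.
  apply: Heta => //; rewrite ger0_norm ?subr_ge0 ?(le_trans y2 (ub _)) //.
  by rewrite ltrBlDl -ltrBlDr (lt_le_trans hk y1).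
have e2 : `|S l - S (x k)| < d / 2.
  apply: Heta => //; rewrite ger0_norm ?subr_ge0 ?ub //.
  by rewrite ltrBlDl -ltrBlDr hk.
have : `|S y - S (x k)| < d.
  rewrite (_ : S y - S (x k) = (S l - S (x k)) - (S l - S y)); last by lra.
  apply: le_lt_trans (ler_normB _ _) _.
  by rewrite (splitr d) ltrD // e2.
by rewrite ltNge y3.
Qed.

End Cont.

Section LP.
Variable R : realType.
Variables (S : R -> R) (T d : R).
Hypothesis hc : {within `[0, T], continuous S}.
Hypotheses (hT : 0 < T) (hd : 0 < d) (hS0 : S 0 = 0).

Let E a := [set u | a <= u <= T /\ ((grid d (S u) /\ S u <> S a) \/ u = T)].

Lemma next_lpE a : next_lp S T d a = inf (E a).
Proof. by []. Qed.

Lemma E_inf a : a <= T -> has_inf (E a).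
Proof.
move=> haT; split; first by exists T; split; [rewrite haT lexx | right].
by exists a => u [/andP[]].
Qed.

Lemma next_range a : a <= T -> a <= next_lp S T d a <= T.
Proof.
move=> haT; rewrite next_lpE; apply/andP; split.
  by apply: lb_le_inf; [case: (E_inf haT) | move=> u [/andP[]]].
by apply: ge_inf; [case: (E_inf haT) | split; [rewrite haT lexx | right]].
Qed.

Lemma next_track a u : a <= u <= T -> grid d (S u) -> S u <> S a ->
  next_lp S T d a <= u.
Proof.
move=> hu hg hne; rewrite next_lpE; apply: ge_inf; last by split => //; left.
by case: (E_inf (le_trans (proj1 (andP hu)) (proj2 (andP hu)))).
Qed.

Lemma next_attain a : 0 <= a -> a <= T -> next_lp S T d a < T ->
  grid d (S (next_lp S T d a)) /\ S (next_lp S T d a) <> S a.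
Proof.
move=> h0 haT hlt; set u := next_lp S T d a.
have hinf := E_inf haT.
have hu : 0 <= u <= T by case/andP: (next_range haT) => h1 h2; rewrite (le_trans h0 h1) h2.
have hd2 : 0 < d / 2 by rewrite divr_gt0.
have [eta heta Heta] := cont_ed hc hu hd2.
set eta' := Num.min eta (T - u).
have heta' : 0 < eta' by rewrite lt_min heta subr_gt0 hlt.
have near_pt : forall e, 0 < e -> exists v, [/\ E a v, u <= v, v < u + Num.min e eta' &
      grid d (S v) /\ S v <> S a].
  move=> e he.
  have he' : 0 < Num.min e eta' by rewrite lt_min he heta'.
  have [v Ev hv] := inf_adherent he' hinf.
  have uv : u <= v by apply: ge_inf => //; case: hinf.
  exists v; split => //.
  case: Ev => _ [//|vT]; exfalso.
  have hm : Num.min e eta' <= T - u by rewrite ge_min; apply/orP; right; rewrite ge_min lexx orbT.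
  move: hv; rewrite vT -/u; lra.
have close : forall v, u <= v -> v < u + eta' -> v <= T -> `|S u - S v| < d / 2.
  move=> v h1 h2 h3; apply: Heta.
    by case/andP: hu => h4 _; rewrite (le_trans h4 h1) h3.
  rewrite distrC ger0_norm ?subr_ge0 // ltrBlDl (lt_le_trans h2) // lerD2l.
  by rewrite ge_min lexx.
have [v0 [Ev0 uv0 hv0 [g0 ne0]]] := near_pt 1 ltr01.
have hv0' : v0 < u + eta' by apply: (lt_le_trans hv0); rewrite lerD2l ge_min lexx orbT.
have v0T : v0 <= T by case: Ev0 => /andP[].
have -> : S u = S v0.
  apply: (lim_right_val hc) => // e he.
  have [v [Ev uv hv [gv nev]]] := near_pt e he.
  have hv' : v < u + eta' by apply: (lt_le_trans hv); rewrite lerD2l ge_min lexx orbT.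
  have vT : v <= T by case: Ev => /andP[].
  exists v; split => //.
    by apply: (lt_le_trans hv); rewrite lerD2l ge_min lexx.
  apply: grid_close hd gv g0 _.
  rewrite (_ : S v - S v0 = (S u - S v0) - (S u - S v)); last by lra.
  apply: le_lt_trans (ler_normB _ _) _.
  by rewrite (splitr d) ltrD // close.
by split.
Qed.

End LP.

Lemma gridD (R : realType) (d g : R) : grid d g -> grid d (g + d) /\ grid d (g - d).
Proof.
move=> [z ->]; split; [exists (z + 1) | exists (z - 1)].
  by rewrite intrD mulrDl mul1r.
by rewrite intrB mulrBl mul1r.
Qed.

Section LP2.
Variable R : realType.
Variables (S : R -> R) (T d : R).
Hypothesis hc : {within `[0, T], continuous S}.
Hypotheses (hT : 0 < T) (hd : 0 < d) (hS0 : S 0 = 0).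

Local Notation lpk := (lp S T d).

Lemma lpS k : lpk k.+1 = next_lp S T d (lpk k). Proof. by []. Qed.

Lemma lp_range k : 0 <= lpk k <= T.
Proof.
elim: k => [|k IH]; first by rewrite /= lexx ltW.
case/andP: IH => h1 h2; rewrite lpS.
by case/andP: (next_range S d h2) => h3 ->; rewrite (le_trans h1 h3).
Qed.

Lemma lp_le1 k : lpk k <= lpk k.+1.
Proof. by rewrite lpS; case/andP: (lp_range k) => _ h; case/andP: (next_range S d h). Qed.

Lemma lp_mono k k' : (k <= k')%N -> lpk k <= lpk k'.
Proof.
move=> hk; rewrite -(subnKC hk); elim: (k' - k)%N => [|m IH]; first by rewrite addn0.
by rewrite addnS; exact: le_trans IH (lp_le1 _).
Qed.

Lemma lpT k : lpk k = T -> lpk k.+1 = T.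
Proof.
move=> h; apply/le_anti; rewrite (proj2 (andP (lp_range k.+1))) /=.
by rewrite -{1}h; exact: lp_le1.
Qed.

Lemma lp_grid k : lpk k < T -> grid d (S (lpk k)).
Proof.
elim: k => [|k IH] hk; first by rewrite /= hS0; exact: grid0.
case/andP: (lp_range k) => h0 h1.
by case: (next_attain hc hd h0 h1 hk).
Qed.

Lemma lp_neq k : lpk k.+1 < T -> S (lpk k.+1) <> S (lpk k).
Proof.
move=> hk; case/andP: (lp_range k) => h0 h1.
by case: (next_attain hc hd h0 h1 hk).
Qed.

Lemma lp_track k u : lpk k <= u <= T -> grid d (S u) -> S u <> S (lpk k) -> lpk k.+1 <= u.
Proof. by move=> hu hg hne; rewrite lpS; apply: next_track. Qed.

Lemma mm_between (x y v : R) : x <= v <= y -> Num.min x y <= v <= Num.max x y.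
Proof. by move=> /andP[h1 h2]; rewrite ge_min le_max h1 h2 orbT. Qed.

Lemma mm_between' (x y v : R) : y <= v <= x -> Num.min x y <= v <= Num.max x y.
Proof. by move=> /andP[h1 h2]; rewrite ge_min le_max h1 h2 orbT. Qed.

Lemma lp_cross k u : lpk k < T -> lpk k <= u -> u <= T -> d <= `|S u - S (lpk k)| ->
  exists c, [/\ lpk k <= c, c <= u, lpk k.+1 <= c & (d < `|S u - S (lpk k)| -> c < u)].
Proof.
move=> hkT h1 h2 hdist.
set g := S (lpk k).
have hg : grid d g by apply: lp_grid.
have h0 : 0 <= lpk k by case/andP: (lp_range k).
have hgd : S (lpk k) = g by [].
have hd' : (0:R) < d := hd.
clearbody g; rewrite hgd in hdist *.
case: (gridD hg) => gp gm.
have [hle|hlt] := leP g (S u).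
  move: hdist; rewrite ger0_norm ?subr_ge0 // => hdist.
  have [c /andP[c1 c2] hSc] : exists2 c, lpk k <= c <= u & S c = g + d.
    have hv : g <= g + d <= S u by apply/andP; split; lra.
    by apply: ivt => //; apply: mm_between; rewrite hgd.
  exists c; split => //.
    apply: lp_track; first by rewrite c1 (le_trans c2 h2).
      by rewrite hSc.
    by rewrite hSc hgd => /eqP; rewrite -subr_eq0 addrC addKr gt_eqF.
  move=> hlt; rewrite lt_neqAle c2 andbT; apply/eqP => cu.
  by move: hSc; rewrite cu => hSc; move: hlt; rewrite hSc; lra.
have hn : S u - g <= 0 by rewrite subr_le0 ltW.
move: hdist; rewrite ler0_norm // => hdist.
have [c /andP[c1 c2] hSc] : exists2 c, lpk k <= c <= u & S c = g - d.
  have hv : S u <= g - d <= g by apply/andP; split; lra.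
  by apply: ivt => //; apply: mm_between'; rewrite hgd.
exists c; split => //.
  apply: lp_track; first by rewrite c1 (le_trans c2 h2).
    by rewrite hSc.
  by rewrite hSc hgd => hh; move: hd; lra.
move=> hlt'; rewrite lt_neqAle c2 andbT; apply/eqP => cu.
by move: hSc; rewrite cu => hSc; move: hlt'; rewrite hSc; lra.
Qed.

Lemma lp_stay_lt k u : lpk k < T -> lpk k <= u -> u < lpk k.+1 -> `|S u - S (lpk k)| < d.
Proof.
move=> hkT h1 h2; rewrite ltNge; apply/negP => hh.
have uT : u <= T by apply: (le_trans (ltW h2)); case/andP: (lp_range k.+1).
have [c [c1 c2 c3 _]] := lp_cross hkT h1 uT hh.
by move: (le_lt_trans c3 (le_lt_trans c2 h2)); rewrite ltxx.
Qed.

Lemma lp_stay k u : lpk k < T -> lpk k <= u -> u <= lpk k.+1 -> `|S u - S (lpk k)| <= d.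
Proof.
move=> hkT h1 h2; rewrite leNgt; apply/negP => hh.
have uT : u <= T by apply: (le_trans h2); case/andP: (lp_range k.+1).
have [c [c1 c2 c3 c4]] := lp_cross hkT h1 uT (ltW hh).
by move: (le_lt_trans c3 (lt_le_trans (c4 hh) h2)); rewrite ltxx.
Qed.

Lemma lp_step k : lpk k.+1 < T -> `|S (lpk k.+1) - S (lpk k)| = d.
Proof.
move=> hk1.
have hk : lpk k < T by apply: le_lt_trans (lp_le1 k) hk1.
apply/le_anti; rewrite lp_stay ?lp_le1 //=.
rewrite leNgt; apply/negP => hh.
apply: (lp_neq hk1); exact: grid_close hd (lp_grid hk1) (lp_grid hk) hh.
Qed.

Lemma lp_lt k : lpk k.+1 < T -> lpk k < lpk k.+1.
Proof.
move=> hk1; rewrite lt_neqAle lp_le1 andbT; apply/eqP => h.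
by apply: (lp_neq hk1); rewrite h.
Qed.

Lemma lp_fin : exists N, lpk N = T.
Proof.
apply: contrapT => hno.
have hlt : forall k, lpk k < T.
  move=> k; rewrite lt_neqAle (proj2 (andP (lp_range k))) andbT; apply/eqP => h.
  by apply: hno; exists k.
apply: (no_inf_osc hc hd (x := lpk)) => //; first exact: lp_range; first exact: lp_le1.
move=> k; exists (lpk k.+1); split => //; first exact: lp_le1.
by rewrite lp_step.
Qed.

Lemma lp_after N k : lpk N = T -> (N <= k)%N -> lpk k = T.
Proof.
move=> hN hk; rewrite -(subnKC hk); elim: (k - N)%N => [|m IH]; first by rewrite addn0.
by rewrite addnS; apply: lpT.
Qed.

End LP2.

Section Exc.
Variable R : realType.
Variables (S : R -> R) (T d : R).
Hypothesis hc : {within `[0, T], continuous S}.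
Hypotheses (hT : 0 < T) (hd : 0 < d) (hS0 : S 0 = 0).

Let HS a lvl := [set u | a < u <= T /\ S u = lvl].

Lemma hit_cases a lvl : hit S T a lvl <= T \/ hit S T a lvl = T + 1.
Proof.
rewrite /hit; destruct (pselect _) as [hex|hn] => /=; last by right.
case: (hex) => u [/andP[h1 h2] h3].
left; have h2' := h2; apply: le_trans h2'; apply: ge_inf; last by split => //; rewrite h1 h2.
by exists a => v [/andP[/ltW]].
Qed.

Lemma hit_le a lvl u : a < u -> u <= T -> S u = lvl -> hit S T a lvl <= u.
Proof.
move=> h1 h2 h3; rewrite /hit; destruct (pselect _) as [hex|hn] => /=; last first.
  by exfalso; apply: hn; exists u; rewrite h1 h2.
apply: ge_inf; last by split => //; rewrite h1.
by exists a => v [/andP[/ltW]].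
Qed.

Lemma hit_big a lvl : T <= a -> hit S T a lvl = T + 1.
Proof.
move=> ha; rewrite /hit; destruct (pselect _) as [hex|hn] => //=; case: (hex) => u [/andP[h1 h2] _].
by exfalso; move: (lt_le_trans h1 h2); rewrite ltNge ha.
Qed.

Lemma hit_attain a lvl : 0 <= a -> S a <> lvl -> hit S T a lvl <= T ->
  a < hit S T a lvl /\ S (hit S T a lvl) = lvl.
Proof.
move=> h0 hne; rewrite /hit; destruct (pselect _) as [hex|hn] => /=; last first.
  by move=> hh; exfalso; move: hh; lra.
move=> hle.
have hinf : has_inf (HS a lvl).
  split; first by case: hex => u hu; exists u.
  by exists a => v [/andP[/ltW]].
have ha : a <= inf (HS a lvl).
  by apply: lb_le_inf; [case: hinf | move=> v [/andP[/ltW]]].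
have hS : S (inf (HS a lvl)) = lvl.
  apply: (lim_right_val hc); first by rewrite (le_trans h0 ha) hle.
  move=> e he; have [v [/andP[v1 v2] v3] hv] := inf_adherent he hinf.
  exists v; split => //; apply: ge_inf; [by case: hinf | by split => //; rewrite v1].
split => //; rewrite lt_neqAle ha andbT; apply/eqP => hh.
by apply: hne; rewrite hh.
Qed.

Local Notation th i := (exc S T d i).2.
Local Notation tau i := (hit S T (exc S T d i).2 d).

Lemma thS i : th i.+1 = hit S T (tau i) 0. Proof. by []. Qed.

Lemma th_cases i : th i = T + 1 \/ (0 <= th i <= T /\ S (th i) = 0).
Proof.
elim: i => [|i IH]; first by right; rewrite /= hS0 lexx ltW.
have hd' : (0:R) < d := hd.
rewrite thS; case: (hit_cases (tau i) 0) => [hle|]; last by left.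
case: IH => [hi|[/andP[h0 h1] h2]].
  have e1 : tau i = T + 1 by rewrite hi hit_big // lerDl ler01.
  by exfalso; move: hle; rewrite e1 hit_big ?lerDl ?ler01 //; lra.
have hne : S (th i) <> d by rewrite h2 => hh; move: hd'; rewrite hh ltxx.
case: (hit_cases (th i) d) => [ht|ht]; last first.
  by exfalso; move: hle; rewrite ht hit_big ?lerDl ?ler01 //; lra.
have [ta1 ta2] := hit_attain h0 hne ht.
have hne2 : S (tau i) <> 0 by rewrite ta2 => hh; move: hd'; rewrite hh ltxx.
have h0' : 0 <= tau i by apply: le_trans h0 (ltW ta1).
have [tb1 tb2] := hit_attain h0' hne2 hle.
by right; rewrite tb2 hle (le_trans h0' (ltW tb1)).
Qed.

Lemma th_step i : th i.+1 <= T ->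
  [/\ 0 <= th i, th i < tau i, tau i < th i.+1 & S (tau i) = d] /\
  [/\ S (th i) = 0, S (th i.+1) = 0 & tau i <= T].
Proof.
move=> hle; have hd' : (0:R) < d := hd.
have taT : tau i < T.
  rewrite ltNge; apply/negP => hh; move: hle; rewrite thS hit_big //; lra.
have thT : th i < T.
  rewrite ltNge; apply/negP => hh; move: taT; rewrite hit_big //; lra.
case: (th_cases i) => [hi|[/andP[h0 h1] h2]]; first by move: thT; rewrite hi; lra.
have hne : S (th i) <> d by rewrite h2 => hh; move: hd'; rewrite hh ltxx.
have [ta1 ta2] := hit_attain h0 hne (ltW taT).
have hne2 : S (tau i) <> 0 by rewrite ta2 => hh; move: hd'; rewrite hh ltxx.
have h0' : 0 <= tau i by apply: le_trans h0 (ltW ta1).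
have [tb1 tb2] := hit_attain h0' hne2 hle.
by split; split => //; apply: ltW.
Qed.

Lemma th_ub i : th i <= T + 1.
Proof. by case: (th_cases i) => [->|[/andP[_ h] _]]; [rewrite lexx | rewrite ler_wpDr]. Qed.

Lemma th_le1 i : th i <= th i.+1.
Proof.
case: (hit_cases (tau i) 0) => hh; last by rewrite thS hh th_ub.
by case: (th_step hh) => -[_ h1 h2 _] _; rewrite ltW // (lt_trans h1 h2).
Qed.

Lemma th_mono i i' : (i <= i')%N -> th i <= th i'.
Proof.
move=> hk; rewrite -(subnKC hk); elim: (i' - i)%N => [|m IH]; first by rewrite addn0.
by rewrite addnS; exact: le_trans IH (th_le1 _).
Qed.

Lemma th_fin : exists M, th M = T + 1.
Proof.
apply: contrapT => hno.
have hle : forall i, th i <= T.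
  by move=> i; case: (th_cases i) => [hi|[/andP[_ ->] _] //]; exfalso; apply: hno; exists i.
apply: (no_inf_osc hc hd (x := fun i => th i)) => //.
- by move=> i; case: (th_cases i) => [hi|[-> _]] //; exfalso; apply: hno; exists i.
- exact: th_le1.
move=> i; exists (tau i); case: (th_step (hle i.+1)) => -[h0 h1 h2 h3] [h4 h5 h6].
split; [exact: ltW | exact: ltW | by rewrite h3 h4 subr0 ger0_norm ?lexx // ltW].
Qed.

Lemma th_after M i : th M = T + 1 -> (M <= i)%N -> th i = T + 1.
Proof.
move=> hM hi; apply/le_anti; rewrite th_ub /= -{1}hM; exact: th_mono.
Qed.

Lemma below_d i u : th i <= T -> th i <= u -> u < tau i -> u <= T -> S u < d.
Proof.
move=> hiT h1 h2 h3; have hd' : (0:R) < d := hd.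
case: (th_cases i) => [hi|[/andP[h0 _] hS]]; first by move: hiT; rewrite hi; lra.
rewrite ltNge; apply/negP => hh.
have [c /andP[c1 c2] hc'] : exists2 c, th i <= c <= u & S c = d.
  have hv : S (th i) <= d <= S u by rewrite hS ltW.
  by apply: (ivt hc) => //; apply: mm_between.
have hci : th i < c.
  rewrite lt_neqAle c1 andbT; apply/eqP => hh2; move: hc'; rewrite -hh2 hS => hh3.
  by move: hd'; rewrite -hh3 ltxx.
have := hit_le hci (le_trans c2 h3) hc'.
by move=> hh2; move: (le_lt_trans hh2 (le_lt_trans c2 h2)); rewrite ltxx.
Qed.

End Exc.

Section NatCount.

Lemma leq_sum_nat n (F G : nat -> nat) :
  (forall i, (i < n)%N -> (F i <= G i)%N) ->
  (\sum_(0 <= i < n) F i <= \sum_(0 <= i < n) G i)%N.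
Proof.
move=> h; rewrite big_nat_cond [X in (_ <= X)%N]big_nat_cond.
by apply: leq_sum => i /andP[/andP[_ hi] _]; apply: h.
Qed.

Lemma sum_le1 n (P : nat -> bool) :
  (forall i i', (i < n)%N -> (i' < n)%N -> P i -> P i' -> i = i') ->
  (\sum_(0 <= i < n) (P i : nat) <= 1)%N.
Proof.
elim: n => [|n IH] h; first by rewrite big_geq.
rewrite big_nat_recr //=.
case hn: (P n).
  rewrite (_ : \sum_(0 <= i < n) (P i : nat) = 0%N) //.
  rewrite big_nat_cond big1 // => i /andP[/andP[_ hi] _].
  case hi': (P i) => //; have := h i n (ltnW hi) (ltnSn n) hi' hn.
  by move=> e; move: hi; rewrite e ltnn.
rewrite addn0; apply: IH => i i' hi hi'; apply: h; exact: ltnW.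
Qed.

Lemma sum_ge1 n (P : nat -> bool) i : (i < n)%N -> P i ->
  (1 <= \sum_(0 <= i < n) (P i : nat))%N.
Proof.
move=> hi hP; elim: n hi => [//|n IH] hi; rewrite big_nat_recr //=.
move: hi; rewrite ltnS leq_eqVlt => /orP[/eqP e|hi].
  by rewrite -e hP addn1.
by apply: leq_trans (IH hi) (leq_addr _ _).
Qed.

Lemma sum_eq0 n (P : nat -> bool) :
  (forall i, (i < n)%N -> ~~ P i) -> \sum_(0 <= i < n) (P i : nat) = 0%N.
Proof.
move=> h; rewrite big_nat_cond big1 // => i /andP[/andP[_ hi] _].
by rewrite (negbTE (h i hi)).
Qed.

Lemma dIVT (P : nat -> bool) a b : (a <= b)%N -> P a -> ~~ P b ->
  exists k, [/\ (a <= k)%N, (k < b)%N, P k & ~~ P k.+1].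
Proof.
elim: b => [|b IH] hab ha hb.
  by move: hab; rewrite leqn0 => /eqP e; move: hb; rewrite -e ha.
case hPb: (P b).
  by exists b; split => //; move: hab; rewrite leq_eqVlt => /orP[/eqP e|//]; move: hb; rewrite -e ha.
have hab' : (a <= b)%N.
  move: hab; rewrite leq_eqVlt => /orP[/eqP e|//]; by move: hb; rewrite -e ha.
have [k [k1 k2 k3 k4]] := IH hab' ha (negbT hPb).
by exists k; split => //; apply: ltnW.
Qed.

End NatCount.

Section Count.
Variable R : realType.
Variables (S : R -> R) (T d t : R).
Hypothesis hc : {within `[0, T], continuous S}.
Hypotheses (hT : 0 < T) (hd : 0 < d) (hS0 : S 0 = 0) (ht0 : 0 < t) (htT : t <= T).

Local Notation lpk := (lp S T d).
Local Notation th i := (exc S T d i).2.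
Local Notation tau i := (hit S T (exc S T d i).2 d).

Definition cj j : bool := (lpk j.+1 <= t) && (S (lpk j) == 0) && (S (lpk j.+1) == d).
Definition Qji j i : bool := cj j && (th i < lpk j.+1) && (lpk j.+1 <= th i.+1).

Lemma gridd : grid d d. Proof. by exists 1; rewrite mul1r. Qed.

Lemma claimA i j j' : (j < j')%N -> Qji j i -> Qji j' i -> False.
Proof.
have hd' : (0:R) < d := hd.
have htT' : t <= T := htT.
move=> hjj /andP[/andP[/andP[/andP[c1 /eqP c2] /eqP c3] q1] q2].
move=> /andP[/andP[/andP[/andP[c1' /eqP c2'] /eqP c3'] q1'] q2'].
have hlT : lpk j.+1 <= T by apply: le_trans c1 htT'.
have thT : th i <= T by apply: ltW; apply: lt_le_trans q1 hlT.
have [hi|[/andP[h0 _] hS]] := th_cases hc hT hd hS0 i; first by move: thT; rewrite hi; lra.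
have htau : tau i <= lpk j.+1 by apply: hit_le.
have hne : S (th i) <> d by rewrite hS => hh; move: hd'; rewrite hh ltxx.
have [ta1 ta2] := hit_attain hc h0 hne (le_trans htau hlT).
have hmono : lpk j.+1 <= lpk j' by apply: (lp_mono S d hT).
have hlt : tau i < lpk j'.
  rewrite lt_neqAle (le_trans htau hmono) andbT; apply/eqP => e.
  by move: ta2; rewrite e c2' => hh; move: hd'; rewrite -hh ltxx.
have hj'T : lpk j' <= T by case/andP: (lp_range S d hT j').
have h1 := hit_le hlt hj'T c2'.
have h2 : lpk j' < lpk j'.+1.
  rewrite lt_neqAle (lp_le1 S d hT) andbT; apply/eqP => e.
  by move: c3'; rewrite -e c2' => hh; move: hd'; rewrite hh ltxx.
by move: (le_lt_trans h1 h2) => hh; move: (lt_le_trans hh q2'); rewrite ltxx.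
Qed.

Lemma claimA' i j j' : Qji j i -> Qji j' i -> j = j'.
Proof.
move=> h1 h2; case: (ltngtP j j') => // hjj.
- by case: (claimA hjj h1 h2).
- by case: (claimA hjj h2 h1).
Qed.

Lemma claimC_uniq j i i' : Qji j i -> Qji j i' -> i = i'.
Proof.
move=> /andP[/andP[_ a1] a2] /andP[/andP[_ b1] b2].
case: (ltngtP i i') => // hii.
- have := th_mono hc hT hd hS0 hii; move=> hh.
  by move: (le_lt_trans hh b1) => hh2; move: (le_lt_trans a2 hh2); rewrite ltxx.
- have := th_mono hc hT hd hS0 hii; move=> hh.
  by move: (le_lt_trans hh a1) => hh2; move: (le_lt_trans b2 hh2); rewrite ltxx.
Qed.

Lemma claimC j M : th M = T + 1 -> cj j -> exists i, (i < M)%N /\ Qji j i.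
Proof.
have hd' : (0:R) < d := hd.
have htT' : t <= T := htT.
move=> hM hcj; move: (hcj) => /andP[/andP[c1 /eqP c2] /eqP c3].
have hlT : lpk j.+1 <= T by apply: le_trans c1 htT'.
have hpos : 0 < lpk j.+1.
  case/andP: (lp_range S d hT j.+1) => h0 _; rewrite lt_neqAle h0 andbT.
  by apply/eqP => e; move: c3; rewrite -e hS0 => hh; move: hd'; rewrite hh ltxx.
have hnM : ~~ (th M < lpk j.+1) by rewrite hM -leNgt; lra.
have [i [_ i2 i3 i4]] := @dIVT (fun i => th i < lpk j.+1) 0 M (leq0n _) hpos hnM.
exists i; split => //; rewrite /Qji hcj i3 /=; by rewrite leNgt.
Qed.

Lemma claimB i N : lpk N = T -> th i.+1 <= t -> exists j, (j < N)%N /\ Qji j i.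
Proof.
have hd' : (0:R) < d := hd.
have htT' : t <= T := htT.
move=> hN hti.
have [[h0 h1 h2 h3] [h4 h5 h6]] := th_step hc hT hd hS0 (le_trans hti htT').
have tauT : tau i < T by apply: lt_le_trans h2 (le_trans hti htT').
have hnk : ~~ (lpk N <= th i) by rewrite hN -ltNge; apply: lt_trans h1 tauT.
have hnm : ~~ (lpk N <= tau i) by rewrite hN -ltNge.
have [k [_ k2 k3 k4]] := @dIVT (fun k => lpk k <= th i) 0 N (leq0n _) h0 hnk.
have [m [_ m2 m3 m4]] := @dIVT (fun k => lpk k <= tau i) 0 N (leq0n _)
   (le_trans h0 (ltW h1)) hnm.
rewrite /= -ltNge in k4; rewrite /= -ltNge in m4.
have thT : th i <= T by apply: ltW; apply: lt_trans h1 tauT.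
have hk0 : S (lpk k) = 0.
  apply: contrapT => hne.
  have := @lp_track R S T d k (th i); rewrite k3 thT h4 => /(_ isT (grid0 _)).
  by move=> /(_ (fun e => hne (esym e))) hh; move: (le_lt_trans hh k4); rewrite ltxx.
have hmd : S (lpk m) = d.
  apply: contrapT => hne.
  have := @lp_track R S T d m (tau i); rewrite m3 (ltW tauT) h3 => /(_ isT gridd).
  by move=> /(_ (fun e => hne (esym e))) hh; move: (le_lt_trans hh m4); rewrite ltxx.
have hkm : (k < m)%N.
  rewrite ltn_neqAle; apply/andP; split.
    by apply/eqP => e; move: hmd; rewrite -e hk0 => hh; move: hd'; rewrite -hh ltxx.
  rewrite leqNgt; apply/negP => hmk.
  have := lp_mono S d hT hmk; move=> hh.
  by move: (le_trans hh k3) => hh2; move: (lt_le_trans m4 hh2) => hh3; move: (lt_trans h1 hh3); rewrite ltxx.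
have hk0' : S (lpk k) <= 0 by rewrite hk0 lexx.
have hmd' : ~~ (S (lpk m) <= 0) by rewrite hmd -ltNge.
have [j [j1 j2 j3 j4]] := @dIVT (fun j => S (lpk j) <= 0) k m (ltnW hkm) hk0' hmd'.
rewrite /= -ltNge in j4.
have hjm : lpk j.+1 <= lpk m by apply: (lp_mono S d hT).
have hjk : lpk k.+1 <= lpk j.+1 by apply: (lp_mono S d hT).
have hj1T : lpk j.+1 < T by apply: le_lt_trans hjm (le_lt_trans m3 tauT).
have hjT : lpk j < T by apply: le_lt_trans (lp_le1 S d hT j) hj1T.
have hSle : S (lpk j.+1) <= d.
  have := le_trans hjm m3; rewrite le_eqVlt => /orP[/eqP e|hlt]; first by rewrite e h3.
  apply: ltW; apply: (below_d hc hT hd hS0 thT) => //.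
    by apply: ltW; apply: lt_le_trans k4 hjk.
  by apply: ltW; apply: lt_trans hlt tauT.
have g1 := lp_grid hc hT hd hS0 hj1T.
have hSd : S (lpk j.+1) = d.
  have := grid_lt hd (grid0 _) g1 j4; rewrite add0r => hh.
  by apply/le_anti; rewrite hh hSle.
have hst := lp_step hc hT hd hS0 hj1T.
have hSj : S (lpk j) = 0.
  move: hst; rewrite hSd ger0_norm; last by rewrite subr_ge0; lra.
  by move=> hh; lra.
exists j; split; first by apply: ltn_trans j2 m2.
rewrite /Qji /cj hSd hSj !eqxx /= !andbT.
have hjt : lpk j.+1 <= tau i by apply: le_trans hjm m3.
rewrite (le_trans hjt (le_trans (ltW h2) hti)) /=.
rewrite (lt_le_trans k4 hjk) /=.
exact: le_trans hjt (ltW h2).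
Qed.


Lemma count_D_le_A N M : lpk N = T -> th M = T + 1 ->
  (\sum_(0 <= i < M) ((th i.+1 <= t)%R : nat) <= \sum_(0 <= j < N) (cj j : nat))%N.
Proof.
move=> hN hM.
apply: (@leq_trans (\sum_(0 <= i < M) \sum_(0 <= j < N) (Qji j i : nat))).
  apply: leq_sum_nat => i hi; case h: (th i.+1 <= t) => //=.
  have [j [hj hq]] := claimB hN h.
  exact: (@sum_ge1 N (fun j => Qji j i) j hj hq).
rewrite exchange_big_nat; apply: leq_sum_nat => j hj; case h: (cj j).
  by apply: (@sum_le1 M (fun i => Qji j i)) => i i' _ _; apply: claimC_uniq.
by rewrite sum_eq0 // => i _; rewrite /Qji h.
Qed.

Lemma count_A_le_D1 N M : lpk N = T -> th M = T + 1 ->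
  (\sum_(0 <= j < N) (cj j : nat) <= 1 + \sum_(0 <= i < M) ((th i.+1 <= t)%R : nat))%N.
Proof.
move=> hN hM.
apply: (@leq_trans (\sum_(0 <= j < N) \sum_(0 <= i < M) (Qji j i : nat))).
  apply: leq_sum_nat => j hj; case h: (cj j) => //=.
  have [i [hi hq]] := claimC hM h.
  exact: (@sum_ge1 M (fun i => Qji j i) i hi hq).
rewrite exchange_big_nat.
apply: (@leq_trans (\sum_(0 <= i < M) ((th i < t)%R : nat))).
  apply: leq_sum_nat => i hi; case h: (th i < t).
    by apply: (@sum_le1 N (fun j => Qji j i)) => j j' _ _; apply: claimA'.
  rewrite sum_eq0 // => j _; apply/negP => /andP[/andP[/andP[/andP[c1 _] _] q1] _].
  by move: h; rewrite (lt_le_trans q1 c1).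
apply: (@leq_trans (\sum_(0 <= i < M.+1) ((th i < t)%R : nat))).
  by rewrite big_nat_recr //= leq_addr.
rewrite big_nat_recl //; apply: leq_add; first exact: leq_b1.
apply: leq_sum_nat => i _; case h: (th i.+1 < t) => //=.
by rewrite (ltW h).
Qed.

End Count.

Section LTerm.
Variable R : realType.
Variables (S : R -> R) (T d t p : R).
Hypothesis hc : {within `[0, T], continuous S}.
Hypotheses (hT : 0 < T) (hd : 0 < d) (hS0 : S 0 = 0) (ht0 : 0 < t) (htT : t <= T).

Local Notation lpk := (lp S T d).
Local Notation w := (d `^ (p - 1)).

Lemma Lterm_ge0 j : 0 <= Lterm S T p d t 0 j.
Proof. by rewrite /Lterm mulr_ge0 ?ler0n ?powR_ge0. Qed.

Lemma Lterm_ge j : (cj S T d t j)%:R * w <= Lterm S T p d t 0 j.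
Proof.
have hd' : (0:R) < d := hd.
case h: (cj S T d t j); last by rewrite mul0r Lterm_ge0.
move: h => /andP[/andP[c1 /eqP c2] /eqP c3].
have c0 : lpk j <= t by apply: le_trans (lp_le1 S d hT j) c1.
rewrite /Lterm (min_l c0) (min_l c1) c2 c3 /in_oint (ltW hd') lexx hd' /=.
by rewrite subr0 ger0_norm ?lexx // ltW.
Qed.

Lemma Lterm_cases j : 1 < p -> Lterm S T p d t 0 j = 0 \/
  (Lterm S T p d t 0 j <= w /\ (cj S T d t j || ((lpk j < t) && (t <= lpk j.+1)))).
Proof.
move=> hp; have hd' : (0:R) < d := hd.
have hp1 : p - 1 != 0 by rewrite subr_eq0 gt_eqF.
have hp0 : 0 <= p - 1 by rewrite subr_ge0 ltW.
have hle1 := lp_le1 S d hT j.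
have [tj|jt] := leP t (lpk j).
  left; rewrite /Lterm (min_r tj) (min_r (le_trans tj hle1)) /in_oint lexx /=.
  by rewrite andbC ltNge; case: (S t <= 0) => /=; rewrite mul0r.
have hjT : lpk j < T by apply: lt_le_trans jt htT.
have gg := lp_grid hc hT hd hS0 hjT.
set u := Num.min (lpk j.+1) t.
have hu1 : lpk j <= u by rewrite /u le_min hle1 ltW.
have hu2 : u <= lpk j.+1 by rewrite /u ge_min lexx.
have hst := lp_stay hc hT hd hS0 hjT hu1 hu2.
rewrite /Lterm (min_l (ltW jt)) -/u /in_oint.
set g := S (lpk j) in gg hst *.
case: ifP => hgu; last first.
  case hb: ((S u <= 0) && (0 < g)); last by left; rewrite mul0r.
  left; move: hb => /andP[hb1 hb2].
  have := grid_lt hd (grid0 _) gg hb2; rewrite add0r => hdg.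
  move: hst; rewrite ler0_norm; last by rewrite subr_le0 ltW // ltNge hgu.
  move=> hst; have -> : S u = 0 by lra.
  by rewrite subr0 normr0 powR0 // mulr0.
case hb: ((g <= 0) && (0 < S u)); last by left; rewrite mul0r.
right; move: hb => /andP[hb1 hb2].
have g0 : g = 0.
  apply/le_anti; rewrite hb1 /=; rewrite leNgt; apply/negP => hg.
  have hgd := grid_lt hd gg (grid0 _) hg.
  move: hst; rewrite ger0_norm ?subr_ge0 // => hst; lra.
have hsu : S u <= d by move: hst; rewrite g0 subr0 (ger0_norm (ltW hb2)).
rewrite mul1r subr0 (ger0_norm (ltW hb2)); split.
  by apply: ge0_ler_powR => //; rewrite ?nnegrE ltW.
have [tj1|j1t] := leP t (lpk j.+1); first by apply/orP; right; apply/andP; split.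
have hu : u = lpk j.+1 by rewrite /u (min_l (ltW j1t)).
have gu : grid d (S u) by rewrite hu; apply: (lp_grid hc hT hd hS0); apply: lt_le_trans j1t htT.
have := grid_lt hd (grid0 _) gu hb2; rewrite add0r => hdu.
have hSu : S u = d by apply/le_anti; rewrite hsu hdu.
apply/orP; left; rewrite /cj (ltW j1t) -/g g0 eqxx -hu hSu eqxx.
done.
Qed.

Lemma Lterm_le j : 1 < p ->
  Lterm S T p d t 0 j <= (cj S T d t j)%:R * w + ((lpk j < t) && (t <= lpk j.+1))%:R * w.
Proof.
move=> hp; have hw : 0 <= w by apply: powR_ge0.
case: (Lterm_cases j hp) => [->|[h1 h2]]; first by rewrite addr_ge0 ?mulr_ge0 ?ler0n.
move: h2 => /orP[->|->]; rewrite mul1r.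
  by rewrite (le_trans h1) // lerDl mulr_ge0 ?ler0n.
by rewrite (le_trans h1) // lerDr mulr_ge0 ?ler0n.
Qed.

End LTerm.

Section Key.
Variable R : realType.
Variables (S : R -> R) (T d t p : R).
Hypothesis hc : {within `[0, T], continuous S}.
Hypotheses (hT : 0 < T) (hd : 0 < d) (hS0 : S 0 = 0) (ht0 : 0 < t) (htT : t <= T).

Local Notation lpk := (lp S T d).
Local Notation th i := (exc S T d i).2.
Local Notation w := (d `^ (p - 1)).

Lemma Lpn_eq N : lpk N = T -> Lpn S T p d t 0 = \sum_(0 <= j < N) Lterm S T p d t 0 j.
Proof.
move=> hN; rewrite /Lpn; apply: lim_near_cst => //; near=> n.
have hn : (N <= n)%N by near: n; exact: nbhs_infty_ge.
rewrite (big_cat_nat _ (n := N)) //=.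
rewrite [X in _ + X = _]big_nat_cond [X in _ + X = _]big1 ?addr0 //.
move=> j /andP[/andP[hj _] _].
rewrite /Lterm (lp_after hT hN hj) (lp_after hT hN (leqW hj)) /in_oint lexx /=.
by rewrite andbC ltNge; case: (_ <= 0) => /=; rewrite mul0r.
Unshelve. all: by end_near.
Qed.

Lemma Dexc_eq M : th M = T + 1 ->
  Dexc S T d t = (\sum_(0 <= i < M) ((th i.+1 <= t)%R : nat))%:R.
Proof.
move=> hM; rewrite /Dexc; apply: lim_near_cst => //; near=> n.
have hn : (M <= n)%N by near: n; exact: nbhs_infty_ge.
rewrite natr_sum (big_cat_nat _ (n := M)) //=.
rewrite [X in _ + X = _]big_nat_cond [X in _ + X = _]big1 ?addr0 //.
move=> i /andP[/andP[hi _] _].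
change (hit S T (hit S T (th i) d) 0) with (th i.+1).
rewrite (th_after hc hT hd hS0 hM (leqW hi)).
have htT' : t <= T := htT.
have -> : (T + 1 <= t) = false by apply/negbTE; rewrite -ltNge; lra.
done.
Unshelve. all: by end_near.
Qed.

Lemma Dexc_ge0 : 0 <= Dexc S T d t.
Proof. by have [M hM] := th_fin hc hT hd hS0; rewrite (Dexc_eq hM) ler0n. Qed.

Lemma keyLB : Dexc S T d t * w <= Lpn S T p d t 0.
Proof.
have [N hN] := lp_fin hc hT hd hS0; have [M hM] := th_fin hc hT hd hS0.
rewrite (Dexc_eq hM) (Lpn_eq hN).
apply: (@le_trans _ _ ((\sum_(0 <= j < N) (cj S T d t j : nat))%:R * w)).
  by apply: ler_wpM2r; [apply: powR_ge0 | rewrite ler_nat; apply: count_D_le_A].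
rewrite natr_sum big_distrl /=; apply: ler_sum => j _; exact: Lterm_ge.
Qed.

Lemma keyUB : 1 < p -> Lpn S T p d t 0 <= (Dexc S T d t + 2) * w.
Proof.
move=> hp; have hw : 0 <= w by apply: powR_ge0.
have [N hN] := lp_fin hc hT hd hS0; have [M hM] := th_fin hc hT hd hS0.
rewrite (Dexc_eq hM) (Lpn_eq hN).
apply: (@le_trans _ _ (\sum_(0 <= j < N) ((cj S T d t j)%:R * w +
   ((lpk j < t) && (t <= lpk j.+1))%:R * w))).
  by apply: ler_sum => j _; apply: Lterm_le.
rewrite big_split /= -!big_distrl /= -!natr_sum -mulrDl ler_wpM2r //.
rewrite -!natrD ler_nat.
have h1 := count_A_le_D1 (t:=t) hc hT hd hS0 htT hN hM.
have h2 : (\sum_(0 <= j < N) (((lpk j < t) && (t <= lpk j.+1))%R : nat) <= 1)%N.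
  apply: sum_le1 => j j' _ _ /andP[a1 a2] /andP[b1 b2].
  case: (ltngtP j j') => // hjj.
    have := lp_mono S d hT hjj; move=> hh; move: (le_trans a2 hh) => hh2.
    by move: (le_lt_trans hh2 b1); rewrite ltxx.
  have := lp_mono S d hT hjj; move=> hh; move: (le_trans b2 hh) => hh2.
  by move: (le_lt_trans hh2 a1); rewrite ltxx.
move: h1 h2; set D := \sum_(0 <= i < M) _; set A := \sum_(0 <= j < N) _; set E := \sum_(0 <= j < N) _.
lia.
Qed.

End Key.

Lemma delta_gt0 (R : realType) n : 0 < delta R n.
Proof. by rewrite /delta invr_gt0 exprn_gt0. Qed.

Lemma delta_pow (R : realType) (q : R) : 0 < q ->
  forall e, 0 < e -> \forall n \near \oo, delta R n `^ q < e.
Proof.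
move=> hq e he.
set r := (2^-1 : R) `^ q.
have h2 : (0:R) <= 2^-1 by rewrite invr_ge0.
have hr0 : 0 <= r by apply: powR_ge0.
have hr1 : r < 1.
  have : (2^-1 : R) `^ q < 1 `^ q.
    apply: gt0_ltr_powR => //; rewrite ?nnegrE //.
    by rewrite invf_lt1 // ltr1n.
  by rewrite powR1.
have E : forall n, delta R n `^ q = r ^+ n.
  move=> n; rewrite /delta -exprVn -powR_mulrn // -powRrM mulrC powRrM powR_mulrn //.
have := @cvg_expr R r; rewrite ger0_norm // => /(_ hr1) /cvgrPdist_lt /(_ e he).
apply: filterS => n; rewrite E sub0r normrN ger0_norm //; exact: exprn_ge0.
Qed.

Theorem mainTheorem6 (R : realType) (p T : R) (S : R -> R) (L : R -> R -> R) :
  1 <= p -> 0 < T ->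
  {within `[0, T], continuous S} -> S 0 = 0 ->
  has_cont_local_time S T p L ->
  (forall t, 0 < t <= T -> 0 < L t 0) ->
  forall t : R, 0 < t <= T ->
  [/\ (p < 2 -> (fun n => delta R n * Dexc S T (delta R n) t) @ \oo --> 0),
      (2 < p -> (fun n => delta R n * Dexc S T (delta R n) t) @ \oo --> +oo /\
                (fun n => Dexc S T (delta R n) t / (L t 0 / delta R n `^ (p - 1)))
                  @ \oo --> (1 : R))
    & (p = 2 -> (fun n => delta R n * Dexc S T (delta R n) t) @ \oo --> L t 0)].
Proof.
move=> hp1 hT hc hS0 [hL1 _] hpos t /andP[ht0 htT].
set l := L t 0.
have hl : 0 < l by apply: hpos; rewrite ht0 htT.
pose Dn n := Dexc S T (delta R n) t.
pose Ln n := Lpn S T p (delta R n) t 0.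
pose w n := delta R n `^ (p - 1).
have hw0 : forall n, 0 < w n by move=> n; apply: powR_gt0; apply: delta_gt0.
have hD0 : forall n, 0 <= Dn n by move=> n; apply: (Dexc_ge0 (t:=t) hc hT (delta_gt0 R n) hS0 htT).
have LB : forall n, Dn n * w n <= Ln n.
  by move=> n; apply: (keyLB p hc hT (delta_gt0 R n) hS0 htT).
have UB : 1 < p -> forall n, Ln n <= (Dn n + 2) * w n.
  by move=> hp n; apply: (keyUB hc hT (delta_gt0 R n) hS0 ht0 htT hp).
have conv : forall e, 0 < e -> \forall n \near \oo, `|Ln n - l| < e.
  move=> e he; have [N hN] := hL1 e he; near=> n.
  apply: hN; last by rewrite (ltW ht0) htT.
  by near: n; exact: nbhs_infty_ge.
have split_d : forall q r, q + r = 1 -> forall n, delta R n = delta R n `^ q * delta R n `^ r.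
  move=> q r hqr n; rewrite -powRD; last by rewrite hqr oner_eq0.
  by rewrite hqr powRr1 // ltW // delta_gt0.
have hl' : (0:R) < l := hl.
split.
- move=> hp2; apply/cvgrPdist_lt => e he.
  have hq : 0 < 2 - p by rewrite subr_gt0.
  have he' : 0 < e / (l + 1) by rewrite divr_gt0 // addr_gt0.
  near=> n.
  have c1 : `|Ln n - l| < 1 by near: n; exact: conv.
  have c2 : delta R n `^ (2 - p) < e / (l + 1) by near: n; exact: delta_pow.
  have hq0 : 0 <= delta R n `^ (2 - p) by apply: powR_ge0.
  have Ln1 : Ln n <= l + 1 by move: c1; rewrite ltr_distlC => /andP[h1 h2]; lra.
  rewrite sub0r normrN ger0_norm; last by apply: mulr_ge0; [apply: ltW; apply: delta_gt0 | apply: hD0].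
  rewrite [X in X * _](split_d (2 - p) (p - 1)); last by lra.
  rewrite -mulrA (mulrC _ (Dn n)).
  apply: (le_lt_trans (ler_wpM2l hq0 (LB n))).
  apply: (le_lt_trans (ler_wpM2l hq0 Ln1)).
  by rewrite -ltr_pdivlMr ?addr_gt0.
- move=> hp2; have hp : 1 < p by lra.
  split.
    apply/cvgryPge => A.
    have hq : 0 < p - 2 by rewrite subr_gt0.
    have hq1 : 0 < p - 1 by rewrite subr_gt0.
    have hA : 0 < l / (4 * (`|A| + 1)) by rewrite divr_gt0 // mulr_gt0 // addr_gt0.
    have hl2 : 0 < l / 2 by rewrite divr_gt0.
    have hl8 : 0 < l / 8 by rewrite divr_gt0.
    near=> n.
    have c1 : `|Ln n - l| < l / 2 by near: n; exact: conv.
    have c2 : w n < l / 8 by near: n; exact: delta_pow.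
    have c3 : delta R n `^ (p - 2) < l / (4 * (`|A| + 1)) by near: n; exact: delta_pow.
    have hb : 0 < delta R n `^ (p - 2) by apply: powR_gt0; apply: delta_gt0.
    have Ln2 : l / 2 < Ln n by move: c1; rewrite ltr_distlC => /andP[h h']; lra.
    have hDw : l / 4 < Dn n * w n by have := UB hp n; lra.
    have hw : w n = delta R n `^ (p - 2) * delta R n.
      rewrite /w (_ : p - 1 = (p - 2) + 1); last by lra.
      rewrite powRD; last by rewrite (gt_eqF (delta_gt0 R n)) implybT.
      by rewrite powRr1 // (ltW (delta_gt0 R n)).
    rewrite leNgt; apply/negP => hlt.
    set b := delta R n `^ (p - 2) in hb c3 hw.
    set x := delta R n * Dn n in hlt.
    have h1 : x * b < A * b by rewrite ltr_pM2r.
    have h2 : A * b <= (`|A| + 1) * b by rewrite ler_pM2r // (le_trans (ler_norm A)) // lerDl.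
    have h3 : b * (4 * (`|A| + 1)) < l by rewrite -ltr_pdivlMr // mulr_gt0 // addr_gt0.
    have h4 : Dn n * w n = x * b by rewrite hw /x; ring.
    by lra.
  apply/cvgrPdist_lt => e he.
  have he2 : 0 < e * l / 2 by rewrite divr_gt0 // mulr_gt0.
  have he4 : 0 < e * l / 4 by rewrite divr_gt0 // mulr_gt0.
  have hq1' : 0 < p - 1 by rewrite subr_gt0.
  near=> n.
  have c1 : `|Ln n - l| < e * l / 2 by near: n; exact: conv.
  have c2 : w n < e * l / 4 by near: n; exact: (delta_pow hq1' he4).
  have hwn : 0 < w n := hw0 n.
  have key : `|l - Dn n * w n| < e * l.
    move: c1; rewrite !ltr_distlC => /andP[c1a c1b].
    have := LB n; have := UB hp n; move=> u1 u2.
    by apply/andP; split; lra.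
  have -> : 1 - Dn n / (l / w n) = (l - Dn n * w n) / l.
    by field; apply/andP; split; [rewrite gt_eqF | rewrite gt_eqF].
  by rewrite normrM normfV (gtr0_norm hl) ltr_pdivrMr.
- move=> hp2; apply/cvgrPdist_lt => e he.
  have he2 : 0 < e / 2 by rewrite divr_gt0.
  have he4 : 0 < e / 4 by rewrite divr_gt0.
  have hp : 1 < p by rewrite hp2 ltr1n.
  near=> n.
  have c1 : `|Ln n - l| < e / 2 by near: n; exact: conv.
  have c2 : delta R n `^ 1 < e / 4 by near: n; exact: (delta_pow ltr01 he4).
  have hwd : w n = delta R n by rewrite /w hp2 (_ : 2 - 1 = 1) ?powRr1 // ?ltW ?delta_gt0 //; lra.
  move: c2; rewrite powRr1 ?ltW ?delta_gt0 // => c2.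
  move: c1; rewrite !ltr_distlC => /andP[c1a c1b].
  have := LB n; have := UB hp n; rewrite hwd => u1 u2.
  rewrite -[Dexc _ _ _ _]/(Dn n).
  by apply/andP; split; lra.
Unshelve. all: by end_near.
Qed.
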